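(* Let $n\geq 3$, $d\geq 2$ and $\ell\in\textup{int}(C_n)$. The map $\varphi_d:M_d(\ell)\to M_{d+1}(\ell)$ is surjective if and only if $d\geq n-1$.
   Context: $C_n$ is the set of $\ell=(l_1,\ldots,l_n)\in\mathbb{R}^n$ with $l_i>0$ and $l_i\leq\sum_{j\neq i}l_j$ for all $i$; $\textup{int}(C_n)$ is its interior. $V_d(\ell)=\{(\mathbf{v}_1,\ldots,\mathbf{v}_{n-1})\in(\mathbb{R}^d)^{n-1} : \|\mathbf{v}_i-\mathbf{v}_{i-1}\|=l_i,\ i=1,\ldots,n\}$ with $\mathbf{v}_0=\mathbf{v}_n=\mathbf{0}$; $M_d(\ell)=V_d(\ell)/SO(d)$ with $SO(d)$ acting diagonally, $[P]$ the class of $P$. For a fixed linear Euclidean isometry $f_d:\mathbb{R}^d\to\mathbb{R}^{d+1}$, $F_d(\mathbf{v}_1,\ldots,\mathbf{v}_{n-1})=(f_d(\mathbf{v}_1),\ldots,f_d(\mathbf{v}_{n-1}))$ and $\varphi_d([P])=[F_d(P)]$. *)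

(* Defs.v *)
From HB Require Import structures.
From mathcomp Require Import all_boot all_order all_algebra.
From mathcomp Require Import all_classical all_reals all_analysis.
Unset Printing Implicit Defensive.
Import Order.TTheory GRing.Theory Num.Theory.
Import numFieldNormedType.Exports.
Local Open Scope classical_set_scope.
Local Open Scope ring_scope.

Section Polygons.
Variable R : realType.

Definition enorm (d : nat) (v : 'rV[R]_d) : R :=
  Num.sqrt (\sum_(j < d) v 0 j ^+ 2).

Definition Cn (n : nat) : set 'rV[R]_n :=
  [set l | forall i : 'I_n, 0 < l 0 i /\ l 0 i <= \sum_(j < n | j != i) l 0 j].

(* A polygon P = (v_1, ..., v_{n-1}), v_k stored as P (k-1). *)
Definition polyg (n d : nat) := 'I_n.-1 -> 'rV[R]_d.

(* vertex v_i for i = 0..n, with v_0 = v_n = 0 *)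
Definition vtx (n d : nat) (P : polyg n d) (i : nat) : 'rV[R]_d :=
  if i is k.+1 then
    (match insub k with Some kk => P kk | None => 0 end)
  else 0.

(* V_d(l): ||v_i - v_{i-1}|| = l_i for i = 1..n  (l_i stored as l 0 (i-1)) *)
Definition Vd (n d : nat) (l : 'rV[R]_n) : set (polyg n d) :=
  [set P | forall i : 'I_n, enorm d (vtx n d P i.+1 - vtx n d P i) = l 0 i].

(* SO(d), acting on row vectors by right multiplication *)
Definition SOd (d : nat) : set 'M[R]_d :=
  [set Q | Q *m Q^T = 1%:M /\ \det Q = 1].

(* [P] = [P'] in M_d(l) = V_d(l)/SO(d) *)
Definition same_class (n d : nat) (P P' : polyg n d) : Prop :=
  exists2 Q, SOd d Q & forall k, P' k = P k *m Q.

Definition Fd (n d : nat) (A : 'M[R]_(d, d.+1)) (P : polyg n d) : polyg n d.+1 :=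
  fun k => P k *m A.

Definition phi_surjective (n d : nat) (l : 'rV[R]_n) (A : 'M[R]_(d, d.+1)) : Prop :=
  forall P' : polyg n d.+1, Vd n d.+1 l P' ->
    exists2 P : polyg n d, Vd n d l P & same_class n d.+1 (Fd n d A P) P'.

End Polygons.

(* Main.v *)
Require Import Defs.
From HB Require Import structures.
From mathcomp Require Import all_boot all_order all_algebra.
From mathcomp Require Import all_classical all_reals all_analysis.
From mathcomp Require Import ring lra zify.
Import Order.TTheory GRing.Theory Num.Theory.
Import numFieldNormedType.Exports.
Local Open Scope classical_set_scope.
Local Open Scope ring_scope.
Definition dot {R : realType} {m : nat} (u v : 'rV[R]_m) : R := (u *m v^T) 0 0.

Lemma dotE {R : realType} {m} (u v : 'rV[R]_m) : dot u v = \sum_j u 0 j * v 0 j.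
Proof. by rewrite /dot mxE; apply: eq_bigr => j _; rewrite mxE. Qed.

Lemma dotC {R : realType} {m} (u v : 'rV[R]_m) : dot u v = dot v u.
Proof. by rewrite !dotE; apply: eq_bigr => j _; rewrite mulrC. Qed.

Lemma dotDl {R : realType} {m} (u v w : 'rV[R]_m) : dot (u + v) w = dot u w + dot v w.
Proof. by rewrite /dot mulmxDl mxE. Qed.

Lemma dotZl {R : realType} {m} (a : R) (u w : 'rV[R]_m) : dot (a *: u) w = a * dot u w.
Proof. by rewrite /dot -scalemxAl mxE. Qed.

Lemma dotNl {R : realType} {m} (u w : 'rV[R]_m) : dot (- u) w = - dot u w.
Proof. by rewrite -scaleN1r dotZl mulN1r. Qed.

Lemma dotBl {R : realType} {m} (u v w : 'rV[R]_m) : dot (u - v) w = dot u w - dot v w.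
Proof. by rewrite dotDl dotNl. Qed.

Lemma dotDr {R : realType} {m} (u v w : 'rV[R]_m) : dot w (u + v) = dot w u + dot w v.
Proof. by rewrite dotC dotDl !(dotC w). Qed.

Lemma dotZr {R : realType} {m} (a : R) (u w : 'rV[R]_m) : dot w (a *: u) = a * dot w u.
Proof. by rewrite dotC dotZl dotC. Qed.

Lemma dotNr {R : realType} {m} (u w : 'rV[R]_m) : dot w (- u) = - dot w u.
Proof. by rewrite dotC dotNl dotC. Qed.

Lemma dotBr {R : realType} {m} (u v w : 'rV[R]_m) : dot w (u - v) = dot w u - dot w v.
Proof. by rewrite dotDr dotNr. Qed.

Lemma dot0l {R : realType} {m} (w : 'rV[R]_m) : dot 0 w = 0.
Proof. by rewrite /dot mul0mx mxE. Qed.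

Lemma dot0r {R : realType} {m} (w : 'rV[R]_m) : dot w 0 = 0.
Proof. by rewrite dotC dot0l. Qed.

Lemma dot_ge0 {R : realType} {m} (u : 'rV[R]_m) : 0 <= dot u u.
Proof. by rewrite dotE; apply: sumr_ge0 => j _; rewrite -expr2 sqr_ge0. Qed.

Lemma dot_eq0 {R : realType} {m} (u : 'rV[R]_m) : dot u u = 0 -> u = 0.
Proof.
rewrite dotE => /eqP; rewrite psumr_eq0 => [/allP H|j _]; last by rewrite -expr2 sqr_ge0.
apply/rowP => j; rewrite mxE; have := H j (mem_index_enum _).
by rewrite /= mulf_eq0 orbb => /eqP.
Qed.

Lemma dot_gt0 {R : realType} {m} (u : 'rV[R]_m) : u != 0 -> 0 < dot u u.
Proof.
move=> u0; rewrite lt_neqAle dot_ge0 andbT; apply/eqP => H.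
by move/eqP: u0; apply; apply: dot_eq0.
Qed.

Lemma enormE {R : realType} {m} (u : 'rV[R]_m) : enorm R m u = Num.sqrt (dot u u).
Proof. by rewrite /enorm dotE; congr Num.sqrt; apply: eq_bigr => j _; rewrite expr2. Qed.

Lemma enorm_eqP {R : realType} {m} (u : 'rV[R]_m) (x : R) : 0 <= x ->
  (enorm R m u = x <-> dot u u = x ^+ 2).
Proof.
move=> x0; rewrite enormE; split => [<-|->]; first by rewrite sqr_sqrtr // dot_ge0.
by rewrite sqrtr_sqr ger0_norm.
Qed.

Lemma dot_orth {R : realType} {m} (G : 'M[R]_m) (u v : 'rV[R]_m) :
  G *m G^T = 1%:M -> dot (u *m G) (v *m G) = dot u v.
Proof. by move=> GG; rewrite /dot trmx_mul mulmxA -(mulmxA u) GG mulmx1. Qed.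

Lemma dot_mulmxl {R : realType} {m k} (u : 'rV[R]_m) (M : 'M[R]_(k, m)) (v : 'rV[R]_k) :
  dot (v *m M) u = dot v (u *m M^T).
Proof. by rewrite /dot trmx_mul trmxK mulmxA. Qed.

Lemma exists_orth {R : realType} {k m} (M : 'M[R]_(k, m)) : (k < m)%N ->
  exists2 z : 'rV[R]_m, z != 0 & z *m M^T = 0.
Proof.
move=> km.
have rK : \rank (kermx M^T) != 0%N.
  rewrite mxrank_ker mxrank_tr; have := rank_leq_row M; lia.
have : ~~ (kermx M^T <= (0 : 'M[R]_(m, m)))%MS by rewrite submx0 -mxrank_eq0.
case/row_subPn => i; rewrite submx0 => Hi.
exists (row i (kermx M^T)) => //.
by apply/sub_kermxP; exact: row_sub.
Qed.

Lemma det_rank1 {R : realType} {m} (c r : 'rV[R]_m) :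
  \det (1%:M + c^T *m r) = 1 + dot r c.
Proof.
have E1 : block_mx (1%:M : 'M[R]_m) 0 (-r) (1%:M : 'M[R]_1) *m
          block_mx 1%:M (c^T) 0 (1%:M + r *m c^T) = block_mx 1%:M (c^T) (-r) 1%:M.
  rewrite mulmx_block !mul1mx !mulmx1 ?mul0mx ?mulmx0 ?addr0 ?add0r.
  by rewrite mulNmx addrCA addNr addr0.
have E2 : block_mx (1%:M + c^T *m r) (c^T) 0 (1%:M : 'M[R]_1) *m
          block_mx (1%:M : 'M[R]_m) 0 (-r) 1%:M = block_mx 1%:M (c^T) (-r) 1%:M.
  rewrite mulmx_block !mul1mx !mulmx1 ?mul0mx ?mulmx0 ?addr0 ?add0r.
  by rewrite mulmxN addrK.
have := congr1 determinant E1; rewrite -E2 !det_mulmx det_lblock det_ublock.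
rewrite ?det_lblock ?det_ublock !det1 ?mul1r ?mulr1 => <-.
by rewrite det_mx11 [in LHS]mxE [(1%:M : 'M[R]_1) 0 0]mxE eqxx.
Qed.

Definition hh {R : realType} {m} (v : 'rV[R]_m) : 'M[R]_m :=
  1%:M - (2 / dot v v) *: (v^T *m v).

Lemma hh_act {R : realType} {m} (v w : 'rV[R]_m) :
  w *m hh v = w - ((2 / dot v v) * dot w v) *: v.
Proof.
rewrite /hh mulmxBr mulmx1 -scalemxAr mulmxA (mx11_scalar (w *m v^T)) mul_scalar_mx.
by rewrite scalerA.
Qed.

Lemma hh_tr {R : realType} {m} (v : 'rV[R]_m) : (hh v)^T = hh v.
Proof. by rewrite /hh linearD /= linearN /= linearZ /= trmx_mul trmxK trmx1. Qed.

Lemma hh_invol {R : realType} {m} (v : 'rV[R]_m) : v != 0 -> hh v *m hh v = 1%:M.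
Proof.
move=> v0; have vp := dot_gt0 _ v0.
apply/row_matrixP => i; rewrite row_mul row1 rowE !hh_act.
set w := delta_mx 0 i; rewrite dotBl dotZl.
rewrite -addrA -opprD -scalerDl.
suff -> : 2 / dot v v * dot w v + 2 / dot v v * (dot w v - 2 / dot v v * dot w v * dot v v) = 0.
  by rewrite scale0r oppr0 addr0.
field; lra.
Qed.

Lemma hh_det {R : realType} {m} (v : 'rV[R]_m) : v != 0 -> \det (hh v) = -1.
Proof.
move=> v0; have vp := dot_gt0 _ v0.
have -> : hh v = 1%:M + (- (2 / dot v v) *: v)^T *m v.
  by rewrite /hh; congr (_ + _); rewrite [(_ *: v)^T]linearZ /= -scalemxAl scaleNr.
rewrite det_rank1 dotZr; field; lra.
Qed.

Lemma invol2 {R : realType} {m} (X Y : 'M[R]_m) :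
  X *m X = 1%:M -> Y *m Y = 1%:M -> X *m Y *m (Y *m X) = 1%:M.
Proof. by move=> HX HY; rewrite mulmxA -(mulmxA X Y Y) HY mulmx1 HX. Qed.

Lemma rot_exists {R : realType} {m} (w u : 'rV[R]_m) : (1 < m)%N ->
  dot w w = 1 -> dot u u = 1 ->
  exists G : 'M[R]_m, [/\ G *m G^T = 1%:M, G^T *m G = 1%:M, \det G = 1 & w *m G = u].
Proof.
move=> m1 ww uu.
have [->|wu] := eqVneq w u.
  by exists 1%:M; rewrite trmx1 !mulmx1 det1.
have [z z0 zu] := exists_orth u m1.
have zu' : dot u z = 0 by rewrite dotC /dot zu mxE.
have v0 : w - u != 0 by rewrite subr_eq0.
exists (hh (w - u) *m hh z); split.
- by rewrite trmx_mul !hh_tr; apply: invol2; apply: hh_invol.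
- by rewrite trmx_mul !hh_tr; apply: invol2; apply: hh_invol.
- by rewrite det_mulmx !hh_det // mulrNN mulr1.
rewrite mulmxA [w *m hh (w - u)]hh_act.
have dvv := dot_gt0 _ v0.
have -> : 2 / dot (w - u) (w - u) * dot w (w - u) = 1.
  move: dvv; rewrite !dotBl !dotBr ww uu (dotC u w) => dvv; field; lra.
by rewrite scale1r opprB addrC subrK hh_act zu' mulr0 scale0r subr0.
Qed.

Lemma dot_delta {R : realType} {m} (i : 'I_m) (w : 'rV[R]_m) : dot (delta_mx 0 i) w = w 0 i.
Proof. by rewrite /dot -rowE !mxE. Qed.

Lemma iso_AAt {R : realType} {d} (A : 'M[R]_(d, d.+1)) :
  (forall v : 'rV[R]_d, enorm R d.+1 (v *m A) = enorm R d v) -> A *m A^T = 1%:M.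
Proof.
move=> HA.
have H : forall v : 'rV[R]_d, dot (v *m A) (v *m A) = dot v v.
  move=> v; have := HA v; rewrite !enormE => E.
  by rewrite -(sqr_sqrtr (dot_ge0 (v *m A))) E sqr_sqrtr // dot_ge0.
have P : forall x y : 'rV[R]_d, dot (x *m A) (y *m A) = dot x y.
  move=> x y; have := H (x + y); rewrite mulmxDl !dotDl !dotDr !H (dotC (y *m A)) (dotC y).
  move=> E; have : 2 * dot (x *m A) (y *m A) = 2 * dot x y by lra.
  by move/(mulfI (lt0r_neq0 (ltr0Sn _ 1))).
apply/matrixP => i j.
have := P (delta_mx 0 j) (delta_mx 0 i).
rewrite dot_mulmxl dot_delta -mulmxA -rowE dot_delta !mxE => ->.
by rewrite eqxx /= eq_sym.
Qed.

Lemma rowspace_fix {R : realType} {d} (A : 'M[R]_(d, d.+1)) (u : 'rV[R]_d.+1) :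
  A *m A^T = 1%:M -> u != 0 -> u *m A^T = 0 ->
  forall z, dot z u = 0 -> z *m A^T *m A = z.
Proof.
move=> AA u0 uA z zu.
have rA : \rank A = d.
  apply/eqP; rewrite eqn_leq rank_leq_row /=.
  by have := mxrankM_maxl A A^T; rewrite AA mxrank1.
have rK : \rank (kermx A^T) = 1%N by rewrite mxrank_ker mxrank_tr rA subSnn.
have uK : (u <= kermx A^T)%MS by apply/sub_kermxP.
have Ku : (kermx A^T <= u)%MS.
  by rewrite -(mxrank_leqif_sup uK).2 rK rank_rV u0.
set p := z - z *m A^T *m A.
have pK : (p <= kermx A^T)%MS.
  by apply/sub_kermxP; rewrite mulmxBl -!mulmxA AA mulmx1 subrr.
have [D pD] := submxP (submx_trans pK Ku).
have pu : dot p u = 0.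
  by rewrite /p dotBl zu dot_mulmxl uA dot0r subrr.
have : D 0 0 * dot u u = 0 by rewrite -dotZl -mul_scalar_mx -mx11_scalar -pD.
move/eqP; rewrite mulf_eq0 (negbTE (lt0r_neq0 (dot_gt0 _ u0))) orbF => /eqP D0.
have : p = 0 by rewrite pD (mx11_scalar D) D0 mul_scalar_mx scale0r.
by move/eqP; rewrite subr_eq0 => /eqP.
Qed.

Lemma normalize {R : realType} {m} (z : 'rV[R]_m) : z != 0 ->
  dot ((Num.sqrt (dot z z))^-1 *: z) ((Num.sqrt (dot z z))^-1 *: z) = 1.
Proof.
move=> z0; have zp := dot_gt0 _ z0.
have sp : 0 < Num.sqrt (dot z z) by rewrite sqrtr_gt0.
rewrite dotZl dotZr mulrA -expr2 exprVn sqr_sqrtr ?dot_ge0 // mulVf //.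
by rewrite lt0r_neq0.
Qed.

Lemma mulmxT_entry {R : realType} {k m} (M : 'M[R]_(k, m)) (w : 'rV[R]_m) (i : 'I_k) :
  (w *m M^T) 0 i = dot (row i M) w.
Proof.
by rewrite dotE !mxE; apply: eq_bigr => j _; rewrite !mxE mulrC.
Qed.

Lemma vtx_map {R : realType} {n d e} (P : polyg R n d) (M : 'M[R]_(d, e)) j :
  vtx R n e (fun k => P k *m M) j = vtx R n d P j *m M.
Proof.
rewrite /vtx; case: j => [|k]; first by rewrite mul0mx.
by case: (insub k) => [kk|] //=; rewrite mul0mx.
Qed.

Lemma vtx_dot0 {R : realType} {n d} (P : polyg R n d) (w : 'rV[R]_d) :
  (forall k, dot (P k) w = 0) -> forall j, dot (vtx R n d P j) w = 0.
Proof.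
move=> H [|k] /=; first by rewrite dot0l.
by case: (insub k) => [kk|] //=; rewrite dot0l.
Qed.

Lemma enorm_orth {R : realType} {m} (G : 'M[R]_m) (x : 'rV[R]_m) :
  G *m G^T = 1%:M -> enorm R m (x *m G) = enorm R m x.
Proof. by move=> GG; rewrite !enormE dot_orth. Qed.

Lemma surj_if {R : realType} (n d : nat) (l : 'rV[R]_n) (A : 'M[R]_(d, d.+1)) :
  (forall v : 'rV[R]_d, enorm R d.+1 (v *m A) = enorm R d v) ->
  (0 < d)%N -> (n.-1 <= d)%N -> phi_surjective R n d l A.
Proof.
move=> HA d0 nd P' HP'.
have AA := iso_AAt A HA.
have [u0 u00 uA0] := exists_orth A (ltnSn d).
set u := (Num.sqrt (dot u0 u0))^-1 *: u0.
have uu : dot u u = 1 by apply: normalize.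
have uA : u *m A^T = 0 by rewrite -scalemxAl uA0 scaler0.
have un0 : u != 0 by apply/eqP => u_0; move: uu; rewrite u_0 dot0l => /eqP; rewrite eq_sym oner_eq0.
pose M := \matrix_(k < n.-1) P' k.
have [w0 w00 wM] := exists_orth M (leq_ltn_trans nd (ltnSn d)).
set w := (Num.sqrt (dot w0 w0))^-1 *: w0.
have ww : dot w w = 1 by apply: normalize.
have Pw : forall k, dot (P' k) w = 0.
  move=> k; rewrite dotZr.
  have := mulmxT_entry M w0 k; rewrite wM mxE rowK => <-; by rewrite mulr0.
have [G [GG GG' dG wG]] := rot_exists w u d0 ww uu.
have uG : forall x, dot x w = 0 -> dot (x *m G) u = 0.
  by move=> x xw; rewrite -wG dot_orth.
have fixG : forall x, dot x w = 0 -> x *m G *m A^T *m A = x *m G.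
  by move=> x xw; apply: (rowspace_fix _ _ AA un0 uA); apply: uG.
exists (fun k => P' k *m G *m A^T).
  move=> i; have := HP' i.
  have -> : (fun k => P' k *m G *m A^T) = (fun k => P' k *m (G *m A^T)).
    by apply: funext => k; rewrite mulmxA.
  rewrite !vtx_map -mulmxBl mulmxA => <-.
  rewrite -HA fixG ?enorm_orth //.
  by rewrite dotBl !(vtx_dot0 _ _ Pw) subrr.
exists G^T.
  by split; rewrite ?trmxK ?det_tr.
by move=> k; rewrite /Fd fixG // -mulmxA GG mulmx1.
Qed.

Lemma dot_comb {R : realType} {m} (a f : 'rV[R]_m) (x y : R) : dot a f = 0 ->
  dot (x *: a + y *: f) (x *: a + y *: f) = x ^+ 2 * dot a a + y ^+ 2 * dot f f.
Proof.
move=> af; rewrite !dotDl !dotDr !dotZl !dotZr (dotC f a) af; ring.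
Qed.

Lemma tri_alg {R : realType} (r p l : R) : 0 < r -> 0 < p ->
  r - p < l -> p - r < l -> l < r + p ->
  let al := (r ^+ 2 + p ^+ 2 - l ^+ 2) / (2 * r ^+ 2) in
  [/\ 0 < p ^+ 2 - al ^+ 2 * r ^+ 2,
      al ^+ 2 * r ^+ 2 + (p ^+ 2 - al ^+ 2 * r ^+ 2) = p ^+ 2 &
      (al - 1) ^+ 2 * r ^+ 2 + (p ^+ 2 - al ^+ 2 * r ^+ 2) = l ^+ 2].
Proof.
move=> r0 p0 h1 h2 h3 al; split.
- have E : p ^+ 2 - al ^+ 2 * r ^+ 2 =
    ((l - r + p) * (l + r - p)) * ((r + p - l) * (r + p + l)) / (4 * r ^+ 2).
    rewrite /al; field; lra.
  rewrite E; apply: divr_gt0; last by nra.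
  apply: mulr_gt0; apply: mulr_gt0; lra.
- ring.
- rewrite /al; field; lra.
Qed.

Definition fan_inv {R : realType} {m : nat} (l rho : nat -> R) (K : nat) (v : nat -> 'rV[R]_m) :=
  [/\ forall k, (0 < k <= K)%N -> dot (v k) (v k) = rho k ^+ 2,
      forall k, (0 < k)%N -> (k < K)%N -> dot (v k.+1 - v k) (v k.+1 - v k) = l k ^+ 2,
      forall k (j : 'I_m), (0 < k <= K)%N -> (k <= m)%N -> (k <= j)%N -> v k 0 j = 0 &
      forall k (j : 'I_m), (0 < k <= K)%N -> (k <= m)%N -> j.+1 = k -> v k 0 j != 0].

Lemma fan_step {R : realType} (m : nat) (l rho : nat -> R) (K : nat) (v : nat -> 'rV[R]_m) :
  (1 < m)%N -> (0 < K)%N -> 0 < rho K -> 0 < rho K.+1 ->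
  rho K - rho K.+1 < l K -> rho K.+1 - rho K < l K -> l K < rho K + rho K.+1 ->
  fan_inv l rho K v -> exists v' : nat -> 'rV[R]_m, fan_inv l rho K.+1 v'.
Proof.
move=> m1 K0 r0 p0 h1 h2 h3 [Ha Hb Hc Hd].
have aa : dot (v K) (v K) = rho K ^+ 2 by apply: Ha; rewrite K0 leqnn.
have [f [ff af fK]] : exists f : 'rV[R]_m, [/\ dot f f = 1, dot (v K) f = 0 &
     forall (j : 'I_m), (K < m)%N -> f 0 j = (j == K :> nat)%:R].
  case: (ltnP K m) => Km.
    exists (delta_mx 0 (Ordinal Km)); split.
    - by rewrite dot_delta mxE !eqxx.
    - rewrite dotC dot_delta; apply: Hc => //=; [by rewrite K0 leqnn | exact: ltnW].
    - by move=> j _; rewrite mxE eqxx /=.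
  have [z z0 zK] := exists_orth (v K) m1.
  exists ((Num.sqrt (dot z z))^-1 *: z); split.
  - exact: normalize.
  - have zK' : dot z (v K) = 0 by rewrite /dot zK mxE.
    by rewrite dotZr dotC zK' mulr0.
  - by move=> j; rewrite ?ltnNge ?Km.
set al := (rho K ^+ 2 + rho K.+1 ^+ 2 - l K ^+ 2) / (2 * rho K ^+ 2).
have [bp E1 E2] := tri_alg _ _ _ r0 p0 h1 h2 h3.
set be := Num.sqrt (rho K.+1 ^+ 2 - al ^+ 2 * rho K ^+ 2).
have be0 : 0 < be by rewrite sqrtr_gt0.
have be2 : be ^+ 2 = rho K.+1 ^+ 2 - al ^+ 2 * rho K ^+ 2 by rewrite sqr_sqrtr // ltW.
exists (fun k => if k == K.+1 then al *: v K + be *: f else v k); split.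
- move=> k /andP[k0]; rewrite leq_eqVlt => /orP[/eqP ->|kK]; first by rewrite eqxx dot_comb // aa ff mulr1 be2.
  by rewrite (ltn_eqF kK) Ha // k0.
- move=> k k0; rewrite ltnS leq_eqVlt => /orP[/eqP ->|kK].
    rewrite eqxx (ltn_eqF (ltnSn K)).
    have -> : al *: v K + be *: f - v K = (al - 1) *: v K + be *: f.
      by rewrite scalerBl scale1r addrAC.
    by rewrite dot_comb // aa ff mulr1 be2.
  by rewrite eqSS (ltn_eqF kK) (ltn_eqF (leqW kK)) Hb.
- move=> k j /andP[k0]; rewrite leq_eqVlt => /orP[/eqP ->|kK] km kj.
    rewrite eqxx !mxE (Hc K j) ?K0 ?leqnn ?(ltnW km) ?(ltnW kj) //.
    by rewrite fK // (gtn_eqF kj) !mulr0 addr0.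
  by rewrite (ltn_eqF kK) Hc // k0.
- move=> k j /andP[k0]; rewrite leq_eqVlt => /orP[/eqP ->|kK] km jk.
    have jK : nat_of_ord j = K by case: jk.
    rewrite eqxx !mxE (Hc K j) ?K0 ?leqnn ?jK //; last by rewrite -jK ltnW.
    by rewrite fK -?jK // eqxx mulr0 add0r mulr1 gt_eqF.
  by rewrite (ltn_eqF kK) Hd // k0.
Qed.

Lemma fan {R : realType} (n m : nat) (l rho : nat -> R) :
  (1 < m)%N -> (m < n)%N -> rho 1%N = l 0%N -> rho n.-1 = l n.-1 ->
  (forall k, (0 < k < n)%N -> 0 < rho k) ->
  (forall k, (0 < k)%N -> (k.+1 < n)%N ->
     [/\ rho k - rho k.+1 < l k, rho k.+1 - rho k < l k & l k < rho k + rho k.+1]) ->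
  exists v : nat -> 'rV[R]_m, [/\ v 0%N = 0, v n = 0,
    forall k, (k < n)%N -> dot (v k.+1 - v k) (v k.+1 - v k) = l k ^+ 2 &
    forall y, (forall k, (0 < k <= m)%N -> dot (v k) y = 0) -> y = 0].
Proof.
move=> m1 mn r1 rn rpos rtri.
have H : forall K, (0 < K < n)%N -> exists v : nat -> 'rV[R]_m, fan_inv l rho K v.
  elim => [//|K IH] /andP[_ Kn].
  case: K IH Kn => [|K] IH Kn.
    have m0 : (0 < m)%N by apply: ltnW.
    have r1p : 0 < rho 1%N by apply: rpos; rewrite /= (ltn_trans m1 mn).
    exists (fun _ => rho 1%N *: delta_mx 0 (Ordinal m0)); split.
    - move=> k /andP[k0 k1]; have -> : k = 1%N by apply/eqP; rewrite eqn_leq k1 k0.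
      by rewrite dotZl dotZr dot_delta mxE !eqxx mulr1 expr2.
    - by move=> k k0 k1; move: k0 k1; case: k.
    - move=> k j /andP[k0 k1] km kj; rewrite !mxE.
      have j0 : (0 < j)%N by apply: leq_trans kj.
      by rewrite (_ : (j == Ordinal m0) = false) ?mulr0 //; apply/eqP => jE; move: j0; rewrite jE.
    - move=> k j /andP[k0 k1] km jk; rewrite !mxE.
      have -> : j = Ordinal m0.
        by apply: val_inj => /=; move: k0 k1; rewrite -jk; case: (nat_of_ord j).
      by rewrite eqxx mulr1 gt_eqF.
  have [v Hv] := IH (ltnW Kn).
  have [h1 h2 h3] := rtri K.+1 isT Kn.
  have r0 : 0 < rho K.+1 by apply: rpos; rewrite /= ltnW.
  have p0 : 0 < rho K.+2 by apply: rpos.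
  have [v' Hv'] := (@fan_step R m l rho K.+1 v m1 isT r0 p0 h1 h2 h3 Hv).
  by exists v'.
have n1 : (0 < n.-1 < n)%N by apply/andP; split; lia.
have [v [Ha Hb Hc Hd]] := H _ n1.
exists (fun k => if (k == 0%N) || (k == n) then 0 else v k); split.
- by [].
- by rewrite eqxx orbT.
- move=> k kn /=.
  case: k kn => [|k] kn /=.
    have -> : (1 == n) = false by apply/eqP; lia.
    by rewrite subr0 Ha ?r1 //; apply/andP; split => //; lia.
  have [kn'|kn'] := eqVneq k.+2 n.
  - have -> : (k.+1 == n) = false by apply/eqP; lia.
    rewrite sub0r dotNl dotNr opprK Ha; last by apply/andP; split => //; lia.
    by rewrite (_ : k.+1 = n.-1) ?rn //; lia.
  have -> : (k.+1 == n) = false by apply/eqP; lia.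
  rewrite ?(negbTE kn') /=.
  by apply: Hb => //; lia.
- move=> y Hy.
  have Hy' : forall k, (0 < k <= m)%N -> dot (v k) y = 0.
    move=> k /andP[k0 km]; have := Hy k; rewrite k0 km => /(_ isT).
    by rewrite (gtn_eqF k0) (ltn_eqF (leq_ltn_trans km mn)).
  have : forall j0 (j : 'I_m), (j < j0)%N -> y 0 j = 0.
    elim => [//|j0 IH] j; rewrite ltnS leq_eqVlt => /orP[/eqP jj|]; last exact: IH.
    have kv : (0 < j.+1 <= m)%N by rewrite ltn_ord.
    have kn : (0 < j.+1 <= n.-1)%N by have := ltn_ord j; lia.
    have := Hy' _ kv; rewrite dotE (bigD1 j) //= big1 ?addr0.
      by move/eqP; rewrite mulf_eq0 (negbTE (Hd _ _ kn (ltn_ord j) erefl)) /= => /eqP.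
    move=> i ij; have [ilt|igt] := ltnP i j.
      by rewrite (IH i) ?mulr0 // -jj.
    rewrite (Hc _ _ kn (ltn_ord j)) ?mul0r //.
    by rewrite ltn_neqAle igt andbT eq_sym; apply: contra ij => /eqP/val_inj ->.
  move=> Hj; apply/rowP => j; rewrite [RHS]mxE.
  by apply: (Hj m); rewrite ltn_ord.
Qed.

Definition gm {R : realType} (L x : R) : R := if x <= L - x then x else L - x.

Lemma gm_lip {R : realType} (L x h : R) : 0 <= h ->
  gm L (x + h) - gm L x <= h /\ gm L x - gm L (x + h) <= h.
Proof.
move=> h0; rewrite /gm; case: (leP (x + h) (L - (x + h))) => H1; case: (leP x (L - x)) => H2; split; lra.
Qed.

Lemma gm_sum {R : realType} (L x h : R) : 0 < h -> 0 < x -> x + h < L -> 2 * h < L ->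
  h < gm L x + gm L (x + h).
Proof.
move=> h0 x0 xh hL; rewrite /gm; case: (leP (x + h) (L - (x + h))) => H1; case: (leP x (L - x)) => H2; lra.
Qed.

Lemma gm_pos {R : realType} (L x : R) : 0 < x -> x < L -> 0 < gm L x.
Proof. by move=> x0 xL; rewrite /gm; case: (leP x (L - x)) => H; lra. Qed.

Lemma gm_le {R : realType} (L x : R) : gm L x <= x.
Proof. by rewrite /gm; case: (leP x (L - x)) => H; lra. Qed.

Lemma gm_l {R : realType} (L x : R) : x <= L - x -> gm L x = x.
Proof. by rewrite /gm => ->. Qed.

Lemma gm_r {R : realType} (L x : R) : L - x <= x -> gm L x = L - x.
Proof. by rewrite /gm; case: (leP x (L - x)) => H1 H2 //; lra. Qed.

Lemma bound_lt1 {R : realType} (f : nat -> R) (N : nat) :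
  (forall k, (k < N)%N -> f k < 1) -> exists2 c : R, c < 1 & forall k, (k < N)%N -> f k <= c.
Proof.
elim: N => [|N IH] H; first by exists 0 => // k.
have [c c1 Hc] := IH (fun k kN => H k (ltnW kN)).
have fN := H N (ltnSn N).
case: (lerP c (f N)) => cf.
  exists (f N) => // k; rewrite ltnS leq_eqVlt => /orP[/eqP ->|kN]; first by [].
  by apply: le_trans (Hc k kN) cf.
exists c => // k; rewrite ltnS leq_eqVlt => /orP[/eqP ->|kN]; first exact: ltW.
exact: Hc.
Qed.


Lemma tri_case1 {R : realType} (a b lk lam : R) : b - a <= lk -> lam * b < b -> lam * a < a ->
  lk < lam * a + lam * b -> a - lk < lam * b ->
  [/\ a - lam * b < lk, lam * b - a < lk & lk < a + lam * b].
Proof. move=> *; split; lra. Qed.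

Lemma tri_case2 {R : realType} (a b lk lam : R) : a - b <= lk -> lam * a < a -> lam * b < b ->
  lk < lam * a + lam * b -> b - lk < lam * a ->
  [/\ lam * a - b < lk, b - lam * a < lk & lk < lam * a + b].
Proof. move=> *; split; lra. Qed.

Lemma tri_case3 {R : realType} (a b lk lam : R) : a - b <= lk -> b - a <= lk ->
  0 < lam -> lam < 1 -> 0 < lk -> lk < lam * a + lam * b ->
  [/\ lam * a - lam * b < lk, lam * b - lam * a < lk & lk < lam * a + lam * b].
Proof.
move=> h1 h2 l0 l1 k0 h3.
have e1 : lam * (a - b) <= lam * lk by rewrite ler_pM2l.
have e2 : lam * (b - a) <= lam * lk by rewrite ler_pM2l.
have e3 : lam * lk < lk by rewrite gtr_pMl.
split; [move: e1 | move: e2 | by []]; rewrite mulrBr; lra.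
Qed.

Ltac slia := repeat match goal with H : ?T |- _ =>
    lazymatch T with
    | is_true (_ <= _)%N => fail | is_true (_ < _)%N => fail
    | @eq ?A _ _ => let B := eval hnf in A in
        lazymatch B with nat => fail | _ => clear H end
    | nat => fail | is_true (_ == _)%N => fail
    | is_true (~~ (_ == _)) => fail
    | _ => clear H end end; lia.

Lemma rho_exists {R : realType} (n : nat) (l : nat -> R) : (3 < n)%N ->
  (forall k, (k < n)%N -> 0 < l k) ->
  (forall k, (k < n)%N -> 2 * l k < \sum_(0 <= j < n) l j) ->
  exists rho : nat -> R, [/\ rho 1%N = l 0%N, rho n.-1 = l n.-1,
    forall k, (0 < k < n)%N -> 0 < rho k &
    forall k, (0 < k)%N -> (k.+1 < n)%N ->
      [/\ rho k - rho k.+1 < l k, rho k.+1 - rho k < l k & l k < rho k + rho k.+1]].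
Proof.
move=> n3 lpos l2.
pose L := \sum_(0 <= j < n) l j.
have l2' : forall k, (k < n)%N -> 2 * l k < L by move=> k kn; exact: l2.
pose s k := \sum_(0 <= j < k) l j.
have sS : forall k, s k.+1 = s k + l k by move=> k; rewrite /s big_nat_recr.
have s0 : s 0%N = 0 by rewrite /s big_geq.
have sn : s n = L by [].
have smono : forall a b, (a <= b)%N -> (b <= n)%N -> s a <= s b.
  move=> a; elim => [|b IH] ab bn; first by have -> : a = 0%N by slia.
  rewrite leq_eqVlt in ab; case/orP: ab => [/eqP -> //|ab].
  rewrite sS; apply: le_trans (IH ab (ltnW bn)) _.
  by have := lpos b bn; lra.
have s1 : s 1%N = l 0%N by rewrite sS s0 add0r.
have snm1 : s n.-1 = L - l n.-1.
  have : s n = s n.-1 + l n.-1 by rewrite -sS prednK //; slia.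
  by rewrite sn => ->; rewrite addrK.
have spos : forall k, (0 < k < n)%N -> 0 < s k /\ s k < L.
  move=> k /andP[k0 kn]; split.
    apply: lt_le_trans (smono 1%N k k0 (ltnW kn)); rewrite s1; apply: lpos; slia.
  apply: le_lt_trans (smono k n.-1 _ _) _; try slia.
  by rewrite snm1; have := lpos n.-1 (ltac:(slia)); lra.
pose G k := gm L (s k).
have Gpos : forall k, (0 < k < n)%N -> 0 < G k.
  by move=> k /spos [h1 h2]; apply: gm_pos.
have G1 : G 1%N = l 0%N.
  by rewrite /G s1 gm_l //; have := l2' 0%N ltac:(slia); lra.
have Gn : G n.-1 = l n.-1.
  have := l2' n.-1 ltac:(slia) => h.
  rewrite /G snm1 gm_r; lra.
have Glip : forall k, (k < n)%N -> G k.+1 - G k <= l k /\ G k - G k.+1 <= l k.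
  by move=> k kn; rewrite /G sS; apply: gm_lip; apply: ltW; apply: lpos.
pose th j := l j.+1 / (G j.+1 + G j.+2).
pose th1 := (G 1%N - l 1%N) / G 2%N.
pose th2 := (G n.-1 - l n.-2) / G n.-2.
pose F k := match k with 0 => 0 | 1 => th1 | 2 => th2 | j.+3 => th j end.
have s2 : s 2%N = l 0%N + l 1%N by rewrite sS s1.
have snm2 : s n.-2 = L - l n.-1 - l n.-2.
  have : s n.-1 = s n.-2 + l n.-2 by rewrite -sS; congr s; slia.
  by rewrite snm1 => ->; rewrite addrK.
have Flt : forall k, (k < n.-2 + 3)%N -> F k < 1.
  case=> [|[|[|j]]] kn /=.
  - exact: ltr01.
  - rewrite /th1 ltr_pdivrMr ?mul1r; last by apply: Gpos; slia.
    rewrite G1 /G s2 /gm; have := l2' 0%N ltac:(slia); have := lpos 1%N ltac:(slia).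
    by case: (leP (l 0%N + l 1%N) (L - (l 0%N + l 1%N))) => H; lra.
  - rewrite /th2 ltr_pdivrMr ?mul1r; last by apply: Gpos; slia.
    rewrite Gn /G snm2 /gm; have := l2' n.-1 ltac:(slia); have := lpos n.-2 ltac:(slia).
    by case: (leP (L - l n.-1 - l n.-2) (L - (L - l n.-1 - l n.-2))) => H; lra.
  - rewrite /th ltr_pdivrMr ?mul1r; last by apply: addr_gt0; apply: Gpos; slia.
    have [h1 h2] := spos j.+2 ltac:(slia).
    rewrite /G (sS j.+1); apply: gm_sum.
    + by apply: lpos; slia.
    + by have [] := spos j.+1 ltac:(slia).
    + by rewrite -sS.
    + by apply: l2'; slia.
have [c c1 Hc] := bound_lt1 F (n.-2 + 3) Flt.
have c0 : 0 <= c by apply: (Hc 0%N); slia.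
pose lam := (1 + c) / 2.
have lam0 : 0 < lam by rewrite /lam; lra.
have lam1 : lam < 1 by rewrite /lam; lra.
have lamc : c < lam by rewrite /lam; lra.
exists (fun k => if (k == 1%N) || (k == n.-1) then G k else lam * G k); split.
- by rewrite eqxx.
- by rewrite eqxx orbT.
- move=> k kn; case: ifP => _; first exact: Gpos.
  by apply: mulr_gt0 => //; apply: Gpos.
move=> [//|j] _ kn.
have [Lp1 Lp2] := Glip j.+1 ltac:(slia).
have Ga := Gpos j.+1 ltac:(slia).
have Gb := Gpos j.+2 ltac:(slia).
have T3 : l j.+1 < lam * (G j.+1 + G j.+2).
  have h : th j <= c := Hc j.+3 ltac:(slia).
  rewrite -ltr_pdivrMr; last by apply: addr_gt0.
  by apply: le_lt_trans h lamc.
have pa : lam * G j.+1 < G j.+1 by rewrite gtr_pMl.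
have pb : lam * G j.+2 < G j.+2 by rewrite gtr_pMl.
have T3' : l j.+1 < lam * G j.+1 + lam * G j.+2 by rewrite -mulrDr.
case: j kn Lp1 Lp2 Ga Gb T3 pa pb T3' => [|j] kn Lp1 Lp2 Ga Gb T3 pa pb T3'.
  have -> : (2 == n.-1) = false by apply/eqP; slia.
  rewrite eqxx /=.
  have h : th1 <= c := Hc 1%N ltac:(slia).
  have h' : G 1%N - l 1%N < lam * G 2%N.
    rewrite -ltr_pdivrMr //; by apply: le_lt_trans h lamc.
  have pa' : lam * G 1%N < G 1%N by rewrite gtr_pMl.
  exact: tri_case1 Lp1 pb pa' T3' h'.
have -> : (j.+2 == 1%N) = false by [].
have -> : (j.+3 == 1%N) = false by [].
have -> : (j.+2 == n.-1) = false by apply/eqP; slia.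
rewrite /=.
case: (eqVneq j.+3 n.-1) => [jn|jn].
  have h : th2 <= c := Hc 2%N ltac:(slia).
  have E1 : n.-2 = j.+2 by slia.
  rewrite /th2 E1 -jn in h.
  have h' : G j.+3 - l j.+2 < lam * G j.+2.
    rewrite -ltr_pdivrMr //; by apply: le_lt_trans h lamc.
  exact: tri_case2 Lp2 pa pb T3' h'.
rewrite ?(negbTE jn) /=.
apply: tri_case3 Lp2 Lp1 lam0 lam1 _ T3'.
by apply: lpos; slia.
Qed.

Lemma int_strict {R : realType} (n : nat) (l : 'rV[R]_n) : interior (@Cn R n) l ->
  forall i : 'I_n, 0 < l 0 i /\ 2 * l 0 i < \sum_(j < n) l 0 j.
Proof.
move=> /nbhs_ballP [e e0 H] i.
have e0' : 0 < e := e0.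
have Hy : forall y : 'rV[R]_n, (forall i j, `|l i j - y i j| < e) -> Cn R n y.
  by move=> y Hy; apply: H; split => // a b; exact: Hy.
have Cl : Cn R n l by apply: Hy => a b; rewrite subrr normr0.
have [l0 _] := Cl i.
split => //.
pose y := l + (e / 2) *: delta_mx 0 i.
have Cy : Cn R n y.
  apply: Hy => a b; rewrite /y !mxE opprD addrA subrr sub0r normrN.
  case: (_ && _); rewrite ?mulr1 ?mulr0 ?normr0 //.
  rewrite ger0_norm; lra.
have [_ Hyi] := Cy i.
have E1 : y 0 i = l 0 i + e / 2 by rewrite !mxE !eqxx mulr1.
have E2 : \sum_(j < n | j != i) y 0 j = \sum_(j < n | j != i) l 0 j.
  by apply: eq_bigr => j ji; rewrite !mxE (negbTE ji) andbF mulr0 addr0.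
rewrite (bigD1 i) //=.
rewrite E1 E2 in Hyi; lra.
Qed.

Lemma vtx_seq {R : realType} (n d : nat) (v : nat -> 'rV[R]_d) :
  v 0%N = 0 -> v n = 0 ->
  forall j, (j <= n)%N -> vtx R n d (fun k : 'I_n.-1 => v (nat_of_ord k).+1) j = v j.
Proof.
move=> v0 vn [|k] kn /=; first by rewrite v0.
case: insubP => [kk _ kkE|]; first by rewrite kkE.
rewrite -leqNgt => kn'; have -> : k.+1 = n by lia.
by rewrite vn.
Qed.

Lemma surj_only {R : realType} (n d : nat) (l : 'rV[R]_n) (A : 'M[R]_(d, d.+1)) :
  (3 <= n)%N -> (2 <= d)%N -> interior (@Cn R n) l ->
  phi_surjective R n d l A -> (n.-1 <= d)%N.
Proof.
move=> n3 d2 lint Hs; rewrite leqNgt; apply/negP => dn.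
have Hl := int_strict _ _ lint.
pose ll := fun k : nat => if (insub k : option 'I_n) is Some i then l 0 i else 0.
have llE : forall i : 'I_n, ll i = l 0 i by move=> i; rewrite /ll valK.
have llk : forall k (kn : (k < n)%N), ll k = l 0 (Ordinal kn) by move=> k kn; rewrite -llE.
have lsum : \sum_(0 <= j < n) ll j = \sum_(j < n) l 0 j.
  by rewrite big_mkord; apply: eq_bigr => i _; rewrite llE.
have lpos : forall k, (k < n)%N -> 0 < ll k.
  by move=> k kn; rewrite (llk k kn); case: (Hl (Ordinal kn)).
have l2 : forall k, (k < n)%N -> 2 * ll k < \sum_(0 <= j < n) ll j.
  by move=> k kn; rewrite lsum (llk k kn); case: (Hl (Ordinal kn)).
have n4 : (3 < n)%N by lia.
have [rho [r1 rn rpos rtri]] := rho_exists _ _ n4 lpos l2.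
have m1 : (1 < d.+1)%N by lia.
have mn : (d.+1 < n)%N by lia.
have [v [v0 vn ve vsp]] := fan _ _ _ _ m1 mn r1 rn rpos rtri.
pose P' : polyg R n d.+1 := fun k : 'I_n.-1 => v (nat_of_ord k).+1.
have HP' : Vd R n d.+1 l P'.
  move=> i; rewrite !vtx_seq //; last by apply: ltnW.
  apply/enorm_eqP; first by apply: ltW; case: (Hl i).
  by rewrite ve // llE.
have [P _ [Q [QQ _] HQ]] := Hs P' HP'.
have [u0 u00 uA] := exists_orth A (ltnSn d).
have y0 : u0 *m Q = 0.
  apply: vsp => -[//|k] /andP[_ km].
  have kn : (k < n.-1)%N by lia.
  have := HQ (Ordinal kn); rewrite /P' /= => ->.
  by rewrite /Fd dot_orth // dot_mulmxl uA dot0r.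
move/eqP: u00; apply.
by rewrite -(mulmx1 u0) -QQ mulmxA y0 mul0mx.
Qed.

Theorem proposition5p1 (R : realType) (n d : nat) (l : 'rV[R]_n)
  (A : 'M[R]_(d, d.+1)) :
  (3 <= n)%N -> (2 <= d)%N ->
  (interior (@Cn R n)) l ->
  (forall v : 'rV[R]_d, enorm R d.+1 (v *m A) = enorm R d v) ->
  (phi_surjective R n d l A <-> (n.-1 <= d)%N).
Proof.
move=> n3 d2 lint HA; split.
  exact: surj_only n3 d2 lint.
move=> nd; apply: surj_if HA _ nd.
by apply: ltnW.
Qed.
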